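(* Let $V$ be a finite-dimensional $k$-vector space with $\dim V\ge2$. There exists a complete flag of $S^2V$ whose stabilizer in $\mathrm{SL}(V)$ (acting via its natural action on $S^2V$) is finite.
   Context: $k$ is an algebraically closed field of characteristic $0$; $S^2V$ is the second symmetric power of $V$. *)

(* Defs.v *)
From HB Require Import structures.
From mathcomp Require Import all_boot all_order all_algebra.
Set Implicit Arguments. Unset Strict Implicit. Unset Printing Implicit Defensive.
Import GRing.Theory.
Local Open Scope ring_scope.

(* V = k^n (column vectors), SL(V) = n x n matrices of determinant 1.
   S^2 V is realised as the space of symmetric tensors in V (x) V, i.e. the
   symmetric n x n matrices, v.w |-> v w^T + w v^T; g in GL(V) acts by
   X |-> g X g^T. *)

Definition s2dim (n : nat) : nat := (n * n.+1) %/ 2.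

Definition in_S2 (k : fieldType) (n : nat) (X : 'M[k]_n) : bool := X^T == X.

Definition S2_act (k : fieldType) (n : nat) (g X : 'M[k]_n) : 'M[k]_n :=
  g *m X *m g^T.

Definition complete_flag_S2 (k : fieldType) (n : nat)
    (W : nat -> {vspace 'M[k]_n}) : Prop :=
  [/\ forall i, (i <= s2dim n)%N -> \dim (W i) = i,
      forall i, (i < s2dim n)%N -> (W i <= W i.+1)%VS
    & forall X : 'M[k]_n, (X \in W (s2dim n)) = in_S2 X].

Definition flag_stab (k : fieldType) (n : nat)
    (W : nat -> {vspace 'M[k]_n}) (g : 'M[k]_n) : Prop :=
  \det g = 1 /\
  forall i, (i <= s2dim n)%N ->
    forall X : 'M[k]_n, X \in W i -> S2_act g X \in W i.

Definition finite_set_of (T : eqType) (P : T -> Prop) : Prop :=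
  exists s : seq T, forall x, P x -> x \in s.

(* Main.v *)
Require Import Defs.
From HB Require Import structures.
From mathcomp Require Import all_boot all_order all_algebra.
Set Implicit Arguments. Unset Strict Implicit. Unset Printing Implicit Defensive.
From mathcomp Require Import zify.
Import GRing.Theory.

Lemma card_lt n : #|[pred p : 'I_n * 'I_n | (p.1 < p.2)%N]| = 'C(n, 2).
Proof.
rewrite -sum1_card.
rewrite (eq_bigl (fun p : 'I_n * 'I_n => true && (p.1 < p.2)%N)) //.
rewrite -(pair_big_dep xpredT (fun i j : 'I_n => (i < j)%N) (fun _ _ => 1)) /=.
rewrite (eq_bigr (fun i : 'I_n => \sum_(j < n | (i < j)%N) 1%N)) //.
rewrite (exchange_big_dep xpredT) //=.
rewrite -bin2_sum big_mkord; apply: eq_bigr => j _.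
rewrite -(big_mkord (fun i => i < j) (fun _ => 1)).
rewrite -(big_nat_widen 0 j n xpredT (fun _ => 1)) ?(ltnW (ltn_ord j)) //.
by rewrite sum_nat_const_nat muln1 subn0.
Qed.

Local Open Scope ring_scope.
Definition Sm (k : fieldType) n (p : 'I_n * 'I_n) : 'M[k]_n :=
  \matrix_(a, c) (((a == p.1) && (c == p.2)) || ((a == p.2) && (c == p.1)))%:R.

Definition Ldiag n := [seq (i,i) | i <- enum 'I_n].
Definition Lst n := enum [pred p : 'I_n * 'I_n | (p.1 < p.2)%N].
Definition LL n := Ldiag n ++ Lst n.

Lemma size_LL n : size (LL n) = (n * n.+1 %/ 2)%N.
Proof.
rewrite size_cat size_map size_enum_ord /Lst -cardE card_lt.
rewrite divn2 mulnC -[n in (n.+1 * n)%N]/(n.+1.-1) -bin2 binS bin1 addnC //.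
Qed.

Lemma LL_le n p : p \in LL n -> (p.1 <= p.2)%N.
Proof.
rewrite mem_cat => /orP[/mapP[i _ ->] //|]; rewrite mem_enum /= => /ltnW //.
Qed.

Lemma LL_uniq n : uniq (LL n).
Proof.
rewrite cat_uniq enum_uniq andbT map_inj_uniq ?enum_uniq; last by move=> i j [].
apply/hasPn => p; rewrite mem_enum /= => lt12; apply/mapP => -[i _ eqp].
by move: lt12; rewrite eqp inE /= ltnn.
Qed.

Lemma LL_mem n (p : 'I_n * 'I_n) : (p.1 <= p.2)%N -> p \in LL n.
Proof.
case: p => i j /=; rewrite leq_eqVlt => /orP[/eqP/val_inj ->|lt].
  by rewrite mem_cat map_f ?mem_enum.
by rewrite mem_cat mem_enum inE /= lt orbT.
Qed.

Lemma Sm_entry (k : fieldType) n (p : 'I_n * 'I_n) (a c : 'I_n) :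
  (p.1 <= p.2)%N -> (a <= c)%N -> (Sm k p) a c = (p == (a, c))%:R.
Proof.
case: p => i j /= hij hac; rewrite mxE /= xpair_eqE.
congr (_%:R); rewrite -!val_eqE /=.
case: (eqVneq (a : nat) i) => [->|]; case: (eqVneq (c : nat) j) => [->|] //=;
  rewrite ?orbF ?eqxx //= ?andbF //;
  case: (eqVneq (a : nat) j); case: (eqVneq (c : nat) i) => //=; lia.
Qed.

Lemma F_free (k : fieldType) m : free (map (@Sm k m.+1) (LL m.+1)).
Proof.
set s := map _ _; apply/(@freeP _ _ _ (in_tuple s)) => c hc t.
have hs : size s = size (LL m.+1) by rewrite size_map.
have hnth (i : 'I_(size s)) : s`_i = Sm k (nth (ord0, ord0) (LL m.+1) i).
  by rewrite (nth_map (ord0, ord0)) // -hs.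
set p := nth (ord0, ord0) (LL m.+1) t.
have pin : p \in LL m.+1 by apply: mem_nth; rewrite -hs.
move: (congr1 (fun M : 'M[k]_m.+1 => M p.1 p.2) hc).
rewrite summxE mxE (bigD1 t) //= big1 ?addr0.
  by rewrite mxE hnth -/p Sm_entry ?LL_le // -surjective_pairing eqxx mulr1.
move=> i nit; rewrite mxE hnth Sm_entry ?LL_le ?mem_nth -?hs //.
rewrite -surjective_pairing /p nth_uniq ?LL_uniq -?hs //.
by rewrite (inj_eq val_inj) (negPf nit) mulr0.
Qed.

Lemma Sm_tr (k : fieldType) n (p : 'I_n * 'I_n) : (Sm k p)^T = Sm k p.
Proof. by apply/matrixP => a c; rewrite !mxE /= orbC; congr (_%:R); congr (_ || _); apply: andbC. Qed.

Lemma span_entry_eq (k : fieldType) n (s : seq 'M[k]_n) (i j : 'I_n) X :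
  (forall Y, Y \in s -> Y i j = Y j i) -> X \in <<s>>%VS -> X i j = X j i.
Proof.
move=> hY /(@coord_span _ _ _ (in_tuple s) X) ->; rewrite !summxE.
apply: eq_bigr => t _; rewrite !mxE hY //; exact: mem_nth.
Qed.

Lemma span_entry0 (k : fieldType) n (s : seq 'M[k]_n) (i j : 'I_n) X :
  (forall Y, Y \in s -> Y i j = 0) -> X \in <<s>>%VS -> X i j = 0.
Proof.
move=> hY /(@coord_span _ _ _ (in_tuple s) X) ->; rewrite !summxE.
by apply: big1 => t _; rewrite !mxE hY ?mulr0 //; exact: mem_nth.
Qed.

Lemma sum_diag (k : fieldType) n : (1%:M : 'M[k]_n) = \sum_i Sm k (i, i).
Proof.
apply/matrixP => a c; rewrite summxE !mxE.
case: (eqVneq a c) => [<-|ne].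
  rewrite (bigD1 a) //= !mxE eqxx /= big1 ?addr0 // => i ni.
  by rewrite mxE orbb; case: eqP => //= ai; move: ni; rewrite ai eqxx.
by rewrite big1 // => i _; rewrite mxE orbb; case: (eqVneq a i) => //= ai; rewrite -ai eq_sym (negPf ne).
Qed.

Definition Bm (k : fieldType) n (x : 'I_n) (p : 'I_n * 'I_n) : 'M[k]_n :=
  if p == (x, x) then 1%:M else Sm k p.
Definition bs (k : fieldType) m := map (@Bm k m.+1 ord0) (LL m.+1).

Lemma Sm_in_bs (k : fieldType) m (p : 'I_m.+1 * 'I_m.+1) :
  p \in LL m.+1 -> Sm k p \in <<bs k m>>%VS.
Proof.
move=> pin; case: (eqVneq p (ord0, ord0)) => [->|np]; last first.
  by apply: memv_span; apply/mapP; exists p => //; rewrite /Bm (negPf np).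
have -> : Sm k (ord0, ord0) = 1%:M - \sum_(i : 'I_m.+1 | i != ord0) Sm k (i, i).
  by rewrite sum_diag (bigD1 ord0) //= addrK.
apply: memvB.
  apply: memv_span; apply/mapP; exists (ord0, ord0); last by rewrite /Bm eqxx.
  exact: LL_mem.
apply: memv_suml _ => i ni; apply: memv_span; apply/mapP; exists (i, i).
  exact: LL_mem.
by rewrite /Bm xpair_eqE andbb (negPf ni).
Qed.

Lemma bs_free (k : fieldType) m : free (bs k m).
Proof.
rewrite /free eqn_leq dim_span /=.
have := F_free k m; rewrite /free size_map => /eqP hF.
rewrite /bs size_map -hF; apply: dimvS; apply/span_subvP => X /mapP[p pin ->].
exact: Sm_in_bs.
Qed.

Lemma sym_expand_le (k : fieldType) n (X : 'M[k]_n) (a c : 'I_n) : (a <= c)%N ->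
  (\sum_(p : 'I_n * 'I_n | (p.1 <= p.2)%N) X p.1 p.2 *: Sm k p) a c = X a c.
Proof.
move=> ac; rewrite summxE (bigD1 (a, c)) //= big1 ?addr0.
  by rewrite mxE Sm_entry // eqxx mulr1.
by move=> p /andP[hp np]; rewrite mxE Sm_entry // (negPf np) mulr0.
Qed.

Lemma mem_bs (k : fieldType) m (X : 'M[k]_m.+1) :
  (X \in <<bs k m>>%VS) = (X^T == X).
Proof.
apply/idP/eqP => [hX|sX].
  apply/matrixP => i j; rewrite mxE; apply: (span_entry_eq _ hX) => Y /mapP[p _ ->].
  rewrite /Bm; case: ifP => _; first by rewrite !mxE eq_sym.
  by rewrite -{1}Sm_tr mxE.
set M := \sum_(p : 'I_m.+1 * 'I_m.+1 | (p.1 <= p.2)%N) X p.1 p.2 *: Sm k p.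
have -> : X = M.
  have MT : M^T = M.
    by rewrite /M linear_sum; apply: eq_bigr => p _; rewrite linearZ /= Sm_tr.
  apply/matrixP => a c; case: (leqP a c) => [ac|ca]; first by rewrite sym_expand_le.
  by rewrite -{1}sX -{1}MT !mxE sym_expand_le // ltnW.
apply: memv_suml _ => p hp; apply: memvZ; exact/Sm_in_bs/LL_mem.
Qed.

Lemma fin_mats (k : fieldType) n (rs : seq k) :
  exists s : seq 'M[k]_n, forall g : 'M_n, (forall i j, g i j \in rs) -> g \in s.
Proof.
exists [seq \matrix_(i, j) nth 0 rs (f (i, j) : nat) | f : {ffun 'I_n * 'I_n -> 'I_(size rs).+1} <- enum {ffun 'I_n * 'I_n -> 'I_(size rs).+1}].
move=> g hg; apply/mapP.
exists [ffun ij : 'I_n * 'I_n => inord (index (g ij.1 ij.2) rs)]; first by rewrite mem_enum.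
apply/matrixP => i j; rewrite mxE ffunE /= inordK ?nth_index //.
by rewrite ltnS; apply: ltnW; rewrite index_mem.
Qed.

Lemma conj_entry (k : fieldType) n (g : 'M[k]_n) j a b :
  (g *m Sm k (j, j) *m g^T) a b = g a j * g b j.
Proof.
have gS l : (g *m Sm k (j, j)) a l = g a j * (l == j)%:R.
  rewrite mxE (bigD1 j) //= big1 ?addr0; first by rewrite mxE eqxx orbb.
  by move=> i nij; rewrite mxE orbb (negPf nij) mulr0.
rewrite mxE (bigD1 j) //= big1 ?addr0; first by rewrite gS eqxx mulr1 mxE.
by move=> i nij; rewrite gS (negPf nij) mulr0 mul0r.
Qed.

Lemma root_seq (k : closedFieldType) (N : nat) :
  exists rs : seq k, forall x : k, x = 0 \/ x ^+ N.+1 = 1 -> x \in rs.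
Proof.
set P : {poly k} := 'X * ('X^(N.+1) - 1%:P).
have P0 : P != 0.
  by rewrite mulf_neq0 ?polyX_eq0 // monic_neq0 // monicXnsubC.
have [rs hrs] := closed_field_poly_normal P.
exists rs => x hx.
have : root P x.
  rewrite /root /P !hornerE; case: hx => ->; first by rewrite mul0r.
  by rewrite subrr mulr0.
rewrite hrs rootZ ?root_prod_XsubC // lead_coef_eq0 //.
Qed.

Theorem lemma7p2 (k : closedFieldType) (hchar : [pchar k] =i pred0)
  (n : nat) (hn : (2 <= n)%N) :
  exists W : nat -> {vspace 'M[k]_n},
    complete_flag_S2 W /\ finite_set_of (flag_stab W).
Proof.
case: n hn => [//|m] hn.
have sizeb : size (bs k m) = s2dim m.+1 by rewrite size_map size_LL.
have Nn : (m.+1 <= s2dim m.+1)%N.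
  by rewrite -sizeb /bs size_map /LL size_cat /Ldiag size_map size_enum_ord leq_addr.
have tn : take m.+1 (bs k m) = map (@Bm k m.+1 ord0) (Ldiag m.+1).
  by rewrite /bs /LL map_cat take_size_cat // /Ldiag !size_map -enumT size_enum_ord.
have t1 : take 1 (bs k m) = [:: 1%:M].
  by rewrite /bs /LL /Ldiag enum_ordSl /= take0 /Bm eqxx.
exists (fun i => <<take i (bs k m)>>%VS); split.
  split.
  - move=> i hi.
    have fr : free (take i (bs k m)).
      move: (bs_free k m); rewrite -{1}(cat_take_drop i (bs k m)); exact: catl_free.
    by rewrite (eqP fr) size_takel // sizeb.
  - move=> i _; apply: sub_span => X hX.
    by rewrite -(take_takel _ (leqnSn i)) in hX; apply: mem_take hX.
  - by move=> X; rewrite -sizeb take_size mem_bs.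
have [rs hrs] := root_seq k (m.+1 + m).
have [s hs] := fin_mats m.+1 rs.
exists s => g [hdet hW]; apply: hs => a j; apply: hrs.
have [c hc] : exists c, g *m g^T = c%:M.
  have := hW 1%N (leq_trans (ltn0Sn m) Nn) 1%:M; rewrite /= t1 memv_span1.
  move=> /(_ isT); rewrite span_seq1 => /vlineP[c]; rewrite /S2_act mulmx1 => ->.
  by exists c; rewrite scalemx1.
have hoff : forall j, j != ord0 -> forall a b, a != b -> g a j * g b j = 0.
  move=> j' nj a' b ab; rewrite -conj_entry.
  have hin : Sm k (j', j') \in <<take m.+1 (bs k m)>>%VS.
    apply: memv_span; rewrite tn; apply/mapP; exists (j', j').
      by apply/mapP; exists j'; rewrite ?mem_enum.
    by rewrite /Bm xpair_eqE andbb (negPf nj).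
  have := hW m.+1 Nn _ hin; rewrite /S2_act => hX.
  apply: (span_entry0 _ hX) => Y; rewrite tn => /mapP[p /mapP[i _ ->] ->].
  rewrite /Bm; case: ifP => _; rewrite !mxE; first by rewrite (negPf ab).
  rewrite /= orbb; case: (eqVneq a' i) => //= ai; case: (eqVneq b i) => //= bi.
  by move: ab; rewrite ai bi eqxx.
have hdiag : forall a b, a != b -> g a j * g b j = 0.
  move=> a' b ab; case: (eqVneq j ord0) => [->|nj]; last exact: hoff.
  move: (congr1 (fun M : 'M[k]_m.+1 => M a' b) hc).
  rewrite !mxE (negPf ab) mulr0n (bigD1 ord0) //= big1 ?addr0 ?mxE //.
  by move=> l nl; rewrite mxE hoff.
have hc1 : c ^+ m.+1 = 1.
  by move: (congr1 determinant hc); rewrite det_mulmx det_tr hdet mulr1 det_scalar.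
have c0 : c != 0.
  by apply/eqP => c0; move: hc1; rewrite c0 expr0n /= => /eqP; rewrite eq_sym oner_eq0.
have hTg : g^T *m g = c%:M.
  have h1 : (c^-1 *: g^T) *m g = 1%:M.
    apply: mulmx1C; rewrite -scalemxAr hc scale_scalar_mx mulVf //.
  rewrite -[g^T *m g]scale1r -(mulfV c0) -scalerA scalemxAl h1 scalemx1 //.
case: (eqVneq (g a j) 0) => [->|ne]; [by left | right].
move: (congr1 (fun M : 'M[k]_m.+1 => M j j) hTg).
rewrite !mxE eqxx mulr1n (bigD1 a) //= big1 ?addr0.
  rewrite mxE => hsq; rewrite -hc1 -hsq -expr2 -exprM; congr (_ ^+ _); lia.
move=> b nb; rewrite mxE.
have := hdiag a b (negbT (introF eqP (fun e => negP nb (introT eqP (esym e))))).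
by move/eqP; rewrite mulf_eq0 (negPf ne) /= => /eqP ->; rewrite mulr0.
Qed.
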